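(* Fix a notion of independence for which $N.X$ is defined for all random variables $X$ and all integers $N\ge 0$ (as in the context). Suppose $\{K_n\}_{n\ge1}$ is a family of generalized cumulants for this notion of independence, i.e. it satisfies (K1'), (K2) and (K3). Then for every $X$ and every $n\ge1$, $M_n(N.X)$ (as a function of $N\in\{0,1,2,\dots\}$) is given by a polynomial in $N$, and $K_n(X)$ equals the coefficient of $N$ in this polynomial. In particular, if $\{K_n\}$ and $\{K_n'\}$ are two families satisfying (K1'), (K2), (K3), then $K_n(X)=K_n'(X)$ for all $n$ and all $X$.
   Context: An algebraic probability space is a pair $(\mathcal{A},\varphi)$ with $\mathcal{A}$ a unital $*$-algebra over $\mathbb{C}$ and $\varphi$ a state ($\varphi$ linear, $\varphi(a^*a)\ge0$, $\varphi(1)=1$). For $X\in\mathcal{A}$ write $M_n(X)=\varphi(X^n)$. Fix a notion of independence of random variables (for example commutative, free, Boolean, or monotone independence, the latter with respect to the order of the variables). For an integer $N\ge1$, $N.X$ denotes $X^{(1)}+\cdots+X^{(N)}$, where $X^{(1)},\dots,X^{(N)}$ are independent (in the fixed sense, and in this order) random variables in some algebraic probability space, each identically distributed to $X$ in the sense of moments ($M_n(X^{(i)})=M_n(X)$ for all $n$); it is assumed that the moments of $N.X$ depend only on the moments of $X$. By convention $M_n(0.X)=\delta_{n0}$ and $K_n(0.X):=\delta_{n0}$. A family $\{K_n\}_{n\ge1}$ assigns to each random variable $X$ (in any algebraic probability space) numbers $K_n(X)$ depending only on the moments of $X$, and satisfies: (K1') $K_n(N.X)=N\,K_n(X)$ for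 all $n\ge1$ and all integers $N\ge 0$; (K2) $K_n(\lambda X)=\lambda^nK_n(X)$ for all $\lambda>0$ and $n\ge1$; (K3) for each $n$ there is a polynomial $Q_n$ in $n-1$ variables, independent of $X$, with $M_n(X)=K_n(X)+Q_n(K_1(X),\dots,K_{n-1}(X))$ for all $X$. *)

(* Defs.v *)
From HB Require Import structures.
From mathcomp Require Import all_boot all_order all_algebra.
Set Implicit Arguments. Unset Strict Implicit. Unset Printing Implicit Defensive.
Import Order.TTheory GRing.Theory Num.Theory.
Local Open Scope ring_scope.

(* A polynomial with coefficients in C in finitely many variables, given as a
   finite list of monomials (coefficient, exponent list); the exponent of
   variable i is the i-th entry of the list (0 if absent). *)
Definition mpoly (C : Type) := seq (C * seq nat).

Definition mpoly_eval (C : numClosedFieldType) (k : nat) (p : mpoly C)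
    (x : 'I_k -> C) : C :=
  \sum_(m <- p) m.1 * \prod_(i < k) x i ^+ nth 0%N m.2 i.

(* Abstract setting of the paper: random variables of type RV (in any
   algebraic probability spaces), their moments M X n = phi(X^n),
   scaling  scale l X = l X, and the operation  dot N X = N.X  coming from the
   fixed notion of independence. *)
Definition independence_setting (C : numClosedFieldType) (RV : Type)
    (M : RV -> nat -> C) (scale : C -> RV -> RV) (dot : nat -> RV -> RV) : Prop :=
  [/\
      (forall X, M X 0%N = 1),
      (forall (l : C) X n, 0 < l -> M (scale l X) n = l ^+ n * M X n),
      (forall X n, M (dot 0%N X) n = (n == 0%N)%:R),
      (* 1.X = X^{(1)} is identically distributed to X *)
      (forall X n, M (dot 1%N X) n = M X n) &
      (forall X Y, (forall n, M X n = M Y n) ->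
         forall N n, M (dot N X) n = M (dot N Y) n)].

Definition gen_cumulants (C : numClosedFieldType) (RV : Type)
    (M : RV -> nat -> C) (scale : C -> RV -> RV) (dot : nat -> RV -> RV)
    (K : nat -> RV -> C) : Prop :=
  [/\
      (forall X Y, (forall n, M X n = M Y n) -> forall n, (1 <= n)%N ->
         K n X = K n Y),
      (* (K1') *)
      (forall n N X, (1 <= n)%N -> K n (dot N X) = N%:R * K n X),
      (* (K2) *)
      (forall (l : C) n X, 0 < l -> (1 <= n)%N -> K n (scale l X) = l ^+ n * K n X) &
      (* (K3) *)
      (exists Q : nat -> mpoly C, forall n X, (1 <= n)%N ->
         M X n = K n X + mpoly_eval (Q n) (fun i : 'I_n.-1 => K i.+1 X))].

(* Main.v *)
Require Import Defs.
From HB Require Import structures.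
From mathcomp Require Import all_boot all_order all_algebra.
Import Order.TTheory GRing.Theory Num.Theory.
Set Implicit Arguments. Unset Strict Implicit.
Local Open Scope ring_scope.

Lemma poly0_nat (C : numClosedFieldType) (p : {poly C}) :
  (forall j : nat, p.[j.+1%:R] = 0) -> p = 0.
Proof.
move=> H; apply: (@roots_geq_poly_eq0 _ p [seq j.+1%:R | j <- iota 0 (size p)]).
- by apply/allP => x /mapP [j _ ->]; rewrite /root H.
- rewrite map_inj_uniq ?iota_uniq // => a b /eqP; rewrite eqr_nat eqSS => /eqP.
  done.
- by rewrite size_map size_iota.
Qed.

Lemma eq_mpoly_eval (C : numClosedFieldType) k (p : mpoly C) x y :
  (forall i, x i = y i) -> mpoly_eval (k:=k) p x = mpoly_eval p y.
Proof.
by move=> H; rewrite /mpoly_eval; apply: eq_bigr => m _; congr (_ * _);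
  apply: eq_bigr => i _; rewrite H.
Qed.

Definition mc (C : numClosedFieldType) k (x : 'I_k -> C) (m : C * seq nat) :=
  m.1 * \prod_(i < k) x i ^+ nth 0%N m.2 i.
Definition md (T : Type) k (m : T * seq nat) := (\sum_(i < k) nth 0%N m.2 i)%N.
Definition mw (T : Type) k (m : T * seq nat) := (\sum_(i < k) i.+1 * nth 0%N m.2 i)%N.

Lemma eval_scaled (C : numClosedFieldType) k (p : mpoly C) (x : 'I_k -> C) a b :
  mpoly_eval p (fun i => a ^+ i.+1 * (b * x i)) =
  \sum_(m <- p) mc x m * a ^+ mw k m * b ^+ md k m.
Proof.
rewrite /mpoly_eval; apply: eq_bigr => m _.
rewrite /mc /mw /md -!prodrXr -!mulrA; congr (_ * _).
rewrite -!big_split /=; apply: eq_bigr => i _.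
set e := nth 0%N m.2 i.
rewrite !exprMn exprM.
by rewrite mulrA [LHS]mulrC.
Qed.

Lemma mw_le (T : Type) k (m : T * seq nat) : (mw k m <= k * md k m)%N.
Proof.
rewrite /mw /md big_distrr /=; apply: leq_sum => i _.
by apply: leq_mul => //; apply: ltn_ord.
Qed.

Lemma part1 (C : numClosedFieldType) (RV : Type)
    (M : RV -> nat -> C) (scale : C -> RV -> RV) (dot : nat -> RV -> RV)
    (K : nat -> RV -> C) :
  independence_setting M scale dot ->
  gen_cumulants M scale dot K ->
  (forall (X : RV) (n : nat), (1 <= n)%N ->
     exists P : {poly C},
       (forall N : nat, M (dot N X) n = P.[N%:R]) /\ K n X = P`_1).
Proof.
case=> _ Hsc _ _ _ [_ HK1 HK2 [Q HQ]] X n n1.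
pose x : 'I_n.-1 -> C := fun i => K i.+1 X.
pose F l N := \sum_(m <- Q n) mc x m * l ^+ mw n.-1 m * N%:R ^+ md n.-1 m.
have e2 : forall N, mpoly_eval (Q n) (fun i : 'I_n.-1 => K i.+1 (dot N X)) = F 1 N.
  move=> N; rewrite /F -eval_scaled; apply: eq_mpoly_eval => i.
  by rewrite expr1n mul1r HK1.
have HM : forall N, M (dot N X) n = N%:R * K n X + F 1 N.
  by move=> N; rewrite HQ // HK1 // e2.
have Hs : forall l N, 0 < l -> F l N = l ^+ n * F 1 N.
  move=> l N lp.
  have e1 : mpoly_eval (Q n) (fun i : 'I_n.-1 => K i.+1 (scale l (dot N X))) = F l N.
    rewrite /F -eval_scaled; apply: eq_mpoly_eval => i.
    by rewrite HK2 // HK1.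
  have E1 := HQ n (scale l (dot N X)) n1.
  rewrite Hsc // HM HK2 // HK1 // e1 mulrDr in E1.
  by move/addrI: E1.
pose P l := \sum_(m <- Q n) (mc x m * l ^+ mw n.-1 m) *: 'X^(md n.-1 m).
have HP : forall l N, (P l).[N%:R] = F l N.
  move=> l N; rewrite /P horner_sum; apply: eq_bigr => m _.
  by rewrite hornerZ hornerXn.
pose S := \sum_(m <- Q n | md n.-1 m == 1%N) mc x m.
have coefid : forall l, 0 < l ->
    \sum_(m <- Q n | md n.-1 m == 1%N) mc x m * l ^+ mw n.-1 m = l ^+ n * S.
  move=> l lp.
  have E : P l - l ^+ n *: P 1 = 0.
    apply: poly0_nat => j; rewrite hornerD hornerN hornerZ !HP Hs ?subrr //.
  have := congr1 (fun p : {poly C} => p`_1) E.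
  rewrite coefB coefZ !coef_sumMXn coef0 /S => /eqP; rewrite subr_eq0 => /eqP ->.
  congr (_ * _); apply: eq_bigr => m _; by rewrite expr1n mulr1.
have S0 : S = 0.
  pose R := \sum_(m <- Q n | md n.-1 m == 1%N) mc x m *: 'X^(mw n.-1 m) - S *: 'X^n.
  have R0 : R = 0.
    apply: poly0_nat => j.
    rewrite /R hornerD hornerN hornerZ hornerXn horner_sum.
    rewrite mulrC -(coefid _ (ltr0Sn _ j)); apply/eqP; rewrite subr_eq0; apply/eqP; apply: eq_bigr => m _.
    by rewrite hornerZ hornerXn.
  have := congr1 (fun p : {poly C} => p`_n) R0.
  rewrite coefB coefZ coefXn eqxx mulr1 coef_sumMXn coef0 big1 ?sub0r.
    by move/eqP; rewrite oppr_eq0 => /eqP.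
  move=> m /andP [/eqP d1 /eqP wn]; exfalso.
  have := mw_le n.-1 m; rewrite d1 wn muln1.
  by move: n1; case: (n) => // n2 _; rewrite ltnn.
exists (K n X *: 'X + P 1); split.
  by move=> N; rewrite HM hornerD hornerZ hornerX HP mulrC.
rewrite coefD coefZ coefX eqxx mulr1 coef_sumMXn.
suff -> : \sum_(m <- Q n | true && (md n.-1 m == 1%N)) mc x m * 1 ^+ mw n.-1 m = S
  by rewrite S0 addr0.
rewrite /S big_mkcond [RHS]big_mkcond; apply: eq_bigr => m _ /=.
by case: ifP => // _; rewrite expr1n mulr1.
Qed.

Theorem mainTheorem1 (C : numClosedFieldType) (RV : Type)
    (M : RV -> nat -> C) (scale : C -> RV -> RV) (dot : nat -> RV -> RV)
    (K : nat -> RV -> C) :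
  independence_setting M scale dot ->
  gen_cumulants M scale dot K ->
  (forall (X : RV) (n : nat), (1 <= n)%N ->
     exists P : {poly C},
       (forall N : nat, M (dot N X) n = P.[N%:R]) /\ K n X = P`_1)
  /\
  (forall K' : nat -> RV -> C, gen_cumulants M scale dot K' ->
     forall (n : nat) (X : RV), (1 <= n)%N -> K n X = K' n X).
Proof.
move=> Hi HK; split; first exact: part1 Hi HK.
move=> K' HK' n X n1.
have [P [HP ->]] := part1 Hi HK X n1.
have [P' [HP' ->]] := part1 Hi HK' X n1.
suff -> : P = P' by [].
apply/eqP; rewrite -subr_eq0; apply/eqP; apply: poly0_nat => j.
by rewrite hornerD hornerN -HP -HP' subrr.
Qed.
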